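(* Let $\mathbb{F}_q$ be a finite field and let $T_1=\{A=(a_{ij})\in UU_4(\mathbb{F}_q): a_{34}=0\}$, a subgroup of the group $UU_4(\mathbb{F}_q)$ of $4\times4$ upper triangular unipotent matrices over $\mathbb{F}_q$. Then $T_1$ is an AC-group and $\omega(T_1)=q^2+1$.
   Context: A group is an AC-group if the centralizer of every non-central element is abelian. A subset $N$ of a group is non-commuting if $xy\ne yx$ for all distinct $x,y\in N$; $\omega(S)$ is the maximum cardinality of a non-commuting subset of $S$. *)

(* Defs.v *)
From mathcomp Require Import all_boot all_order all_algebra all_fingroup all_solvable.
Set Implicit Arguments. Unset Strict Implicit. Unset Printing Implicit Defensive.
Import GRing.Theory.
Local Open Scope group_scope.

Definition AC_group (gT : finGroupType) (G : {set gT}) : Prop :=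
  forall x, x \in G -> x \notin 'Z(G) -> abelian 'C_G[x].

Definition non_commuting (gT : finGroupType) (N : {set gT}) : bool :=
  [forall x in N, forall y in N, (x != y) ==> (x * y != y * x)].

Definition omega (gT : finGroupType) (S : {set gT}) : nat :=
  \max_(N : {set gT} | (N \subset S) && non_commuting N) #|N|.

Definition unitriangular (F : finFieldType) (A : 'M[F]_4) : bool :=
  [forall i : 'I_4, forall j : 'I_4,
     ((j < i)%N ==> (A i j == 0%R)) && ((i == j) ==> (A i j == 1%R))].

Definition UU4 (F : finFieldType) : {set {'GL_4[F]}} :=
  [set x : {'GL_4[F]} | unitriangular (GLval x)].

(* T_1 = { A in UU_4(F) : a_34 = 0 }; indices are 0-based, so a_34 is entry (2,3). *)
Definition T1 (F : finFieldType) : {set {'GL_4[F]}} :=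
  [set x in UU4 F | GLval x (inord 2) (inord 3) == 0%R].

(* Main.v *)
Require Import Defs.
From mathcomp Require Import all_boot all_order all_algebra all_fingroup all_solvable.
From mathcomp Require Import ring.
Set Implicit Arguments. Unset Strict Implicit. Unset Printing Implicit Defensive.
Import GRing.Theory.

Section S.
Variable F : finFieldType.

Definition ent (a b c d e : F) (i j : nat) : F :=
  match i, j with
  | 0, 0 | 1, 1 | 2, 2 | 3, 3 => 1%R
  | 0, 1 => a | 0, 2 => b | 0, 3 => c | 1, 2 => d | 1, 3 => e
  | _, _ => 0%R end.

Definition mk a b c d e : 'M[F]_4 := \matrix_(i, j) ent a b c d e i j.

Local Open Scope ring_scope.

Lemma mkM a b c d e a' b' c' d' e' :
  mk a b c d e *m mk a' b' c' d' e' =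
  mk (a + a') (b + a * d' + b') (c + a * e' + c') (d + d') (e + e').
Proof.
apply/matrixP => i j; rewrite !mxE !big_ord_recr big_ord0 /= !mxE.
case: i => [[|[|[|[|i]]]] Hi] //; case: j => [[|[|[|[|j]]]] Hj] //= ; ring.
Qed.

Lemma mk_ent a b c d e (i j : nat) : (i < 4)%N -> (j < 4)%N ->
  mk a b c d e (inord i) (inord j) = ent a b c d e i j.
Proof. by move=> hi hj; rewrite mxE !inordK. Qed.

Lemma mk_inj a b c d e a' b' c' d' e' :
  mk a b c d e = mk a' b' c' d' e' ->
  [/\ a = a', b = b', c = c', d = d' & e = e'].
Proof.
move=> h.
have H i j : (i < 4)%N -> (j < 4)%N -> ent a b c d e i j = ent a' b' c' d' e' i j.
  by move=> hi hj; rewrite -!mk_ent // h.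
by split; [exact: (H 0 1)|exact: (H 0 2)|exact: (H 0 3)|exact: (H 1 2)|exact: (H 1 3)].
Qed.

Lemma mk_unit a b c d e : mk a b c d e \is a GRing.unit.
Proof.
have h : mk a b c d e *m mk (- a) (a * d - b) (a * e - c) (- d) (- e) = 1%:M.
  rewrite mkM.
  have -> : mk (a + - a) (b + a * - d + (a * d - b)) (c + a * - e + (a * e - c))
     (d + - d) (e + - e) = mk 0 0 0 0 0 by congr mk; ring.
  apply/matrixP => i j; rewrite !mxE.
  by case: i => [[|[|[|[|i]]]] Hi] //; case: j => [[|[|[|[|j]]]] Hj].
by case: (mulmx1_unit h).
Qed.

Definition mkGL a b c d e : {'GL_4[F]} := FinRing.Unit (mk_unit a b c d e).

Lemma mkGLE a b c d e : GLval (mkGL a b c d e) = mk a b c d e.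
Proof. by []. Qed.

Definition co (x : {'GL_4[F]}) (i j : nat) : F := GLval x (inord i) (inord j).

Lemma co_mk a b c d e i j : (i < 4)%N -> (j < 4)%N ->
  co (mkGL a b c d e) i j = ent a b c d e i j.
Proof. by move=> hi hj; rewrite /co mkGLE mk_ent. Qed.

Lemma mkGL_T1 a b c d e : mkGL a b c d e \in T1 F.
Proof.
rewrite !inE; apply/andP; split.
  apply/forallP => i; apply/forallP => j; rewrite mkGLE !mxE.
  by case: i => [[|[|[|[|i]]]] Hi] //; case: j => [[|[|[|[|j]]]] Hj] //=; rewrite ?eqxx.
by rewrite mkGLE mk_ent.
Qed.

Lemma T1_co x : x \in T1 F -> forall i j, (i < 4)%N -> (j < 4)%N ->
  co x i j = ent (co x 0 1) (co x 0 2) (co x 0 3) (co x 1 2) (co x 1 3) i j.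
Proof.
rewrite !inE => /andP[/forallP U h23] i j hi hj.
have := forallP (U (inord i)) (inord j); rewrite !inordK // => /andP[/implyP H1 /implyP H2].
case: i hi H1 H2 => [|[|[|[|i]]]] hi H1 H2 //; case: j hj H1 H2 => [|[|[|[|j]]]] hj H1 H2 //;
  rewrite /co /=;
  first [by [] | by rewrite (eqP (H1 isT)) | by rewrite (eqP (H2 (eqxx _))) | by apply/eqP].
Qed.

Definition A x := co x 0 1.
Definition D x := co x 1 2.
Definition E x := co x 1 3.

Lemma T1_mk x : x \in T1 F ->
  GLval x = mk (co x 0 1) (co x 0 2) (co x 0 3) (co x 1 2) (co x 1 3).
Proof.
move=> hx; apply/matrixP => i j; rewrite mxE -(T1_co hx) //.
by rewrite /co !inord_val.
Qed.

Lemma comm_T1 x y : x \in T1 F -> y \in T1 F ->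
  (x * y = y * x)%g <-> (A x * D y = A y * D x /\ A x * E y = A y * E x).
Proof.
move=> hx hy; split.
  move=> /(congr1 GLval); rewrite !GL_MxE (T1_mk hx) (T1_mk hy) !mkM.
  case/mk_inj => _ h1 h2 _ _; rewrite /A /D /E; split.
    apply: (addrI (co x 0 2)); apply: (addIr (co y 0 2)); rewrite h1; ring.
  apply: (addrI (co x 0 3)); apply: (addIr (co y 0 3)); rewrite h2; ring.
rewrite /A /D /E => -[h1 h2]; apply: val_inj; change (GLval (x * y)%g = GLval (y * x)%g).
rewrite !GL_MxE (T1_mk hx) (T1_mk hy) !mkM.
congr mk; [ring | rewrite h1; ring | rewrite h2; ring | ring | ring].
Qed.

Lemma alg (a d e a1 d1 e1 a2 d2 e2 : F) : ~~ [&& a == 0, d == 0 & e == 0] ->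
  a1 * d = a * d1 -> a1 * e = a * e1 -> a2 * d = a * d2 -> a2 * e = a * e2 ->
  a1 * d2 = a2 * d1 /\ a1 * e2 = a2 * e1.
Proof.
move=> nz h1 h2 h3 h4; have [a0|anz] := eqVneq a 0.
  move: h1 h2 h3 h4 nz; rewrite a0 !mul0r eqxx /= => /eqP h1 /eqP h2 /eqP h3 /eqP h4 nz.
  have [z1 z2] : a1 = 0 /\ a2 = 0.
    case/nandP: nz => nz.
      by move: h1 h3; rewrite !mulf_eq0 (negPf nz) !orbF => /eqP -> /eqP ->.
    by move: h2 h4; rewrite !mulf_eq0 (negPf nz) !orbF => /eqP -> /eqP ->.
  by rewrite z1 z2 !mul0r.
split; apply: (mulfI anz).
  by rewrite mulrCA -h3 [RHS]mulrCA -h1; ring.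
by rewrite mulrCA -h4 [RHS]mulrCA -h2; ring.
Qed.

Lemma AC : AC_group (T1 F).
Proof.
move=> x hx nzx.
have nz : ~~ [&& A x == 0, D x == 0 & E x == 0].
  apply: contra nzx => /and3P[/eqP a0 /eqP d0 /eqP e0].
  apply/centerP; split => // y hy.
  by apply/(comm_T1 hx hy); rewrite a0 d0 e0 !mul0r !mulr0.
apply/centsP => y /setIP[hy /cent1P cy] z /setIP[hz /cent1P cz].
move/(comm_T1 hy hx): cy => [h1 h2].
move/(comm_T1 hz hx): cz => [h3 h4].
apply/(comm_T1 hy hz).
exact: (alg nz h1 h2 h3 h4).
Qed.


Lemma coA a b c d e : A (mkGL a b c d e) = a. Proof. by rewrite /A co_mk. Qed.
Lemma coD a b c d e : D (mkGL a b c d e) = d. Proof. by rewrite /D co_mk. Qed.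
Lemma coE a b c d e : E (mkGL a b c d e) = e. Proof. by rewrite /E co_mk. Qed.

Definition fcl (x : {'GL_4[F]}) : option (F * F) :=
  if A x == 0 then None else Some (D x / A x, E x / A x).

Lemma upper (N : {set {'GL_4[F]}}) : N \subset T1 F -> non_commuting N ->
  (#|N| <= #|F| ^ 2 + 1)%N.
Proof.
move=> sNT ncN.
have nc x y : x \in N -> y \in N -> x != y -> (x * y != y * x)%g.
  by move=> hx hy; move/forall_inP: ncN => /(_ x hx)/forall_inP/(_ y hy)/implyP.
have [le1|gt1] := leqP #|N| 1.
  by apply: leq_trans le1 _; rewrite addn1.
have inj : {in N &, injective fcl}.
  move=> x y hx hy hf; apply/eqP; apply/negPn/negP => nxy.
  have := nc x y hx hy nxy; apply/negP/negPn/eqP.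
  have hxT := subsetP sNT x hx; have hyT := subsetP sNT y hy.
  apply/(comm_T1 hxT hyT); move: hf; rewrite /fcl.
  have [ax0|axn] := eqVneq (A x) 0; have [ay0|ayn] := eqVneq (A y) 0 => // hf.
    by rewrite ax0 ay0 !mul0r.
  case: hf => hd he; split.
    rewrite -[D y](divfK ayn) -[D x](divfK axn) hd; ring.
  rewrite -[E y](divfK ayn) -[E x](divfK axn) he; ring.
rewrite -(card_in_imset inj); apply: leq_trans (max_card _) _.
by rewrite card_option card_prod addn1 -mulnn.
Qed.

Definition g (u : option (F * F)) : {'GL_4[F]} :=
  match u with None => mkGL 0 0 0 1 0 | Some p => mkGL 1 0 0 p.1 p.2 end.

Lemma g_T1 u : g u \in T1 F.
Proof. by case: u => [[]|]; apply: mkGL_T1. Qed.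

Lemma ncg u v : u != v -> (g u * g v != g v * g u)%g.
Proof.
move=> nuv; apply/negP => /eqP /(comm_T1 (g_T1 u) (g_T1 v)) [h1 h2].
move: nuv h1 h2; case: u => [[d e]|]; case: v => [[d' e']|] //=;
  rewrite ?coA ?coD ?coE ?mul1r ?mul0r ?mulr1.
- by move=> ne h1 h2; rewrite h1 h2 eqxx in ne.
- by move=> _ /eqP; rewrite ?(eq_sym 0) oner_eq0. 

- by move=> _ /eqP; rewrite ?(eq_sym 0) oner_eq0. 

Qed.

Lemma g_inj : injective g.
Proof.
move=> u v h; apply/eqP; apply/negPn/negP => nuv.
by have := ncg nuv; rewrite h eqxx.
Qed.

Lemma lower : (#|F| ^ 2 + 1 <= omega (T1 F))%N.
Proof.
have cN : #|g @: setT| = (#|F| ^ 2 + 1)%N.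
  by rewrite card_imset ?cardsT; [rewrite card_option card_prod addn1 -mulnn | exact: g_inj].
rewrite -cN /omega; apply: (@leq_bigmax_cond _ (fun N : {set {'GL_4[F]}} => (N \subset T1 F) && non_commuting N) (fun N => #|N|) (g @: setT)); apply/andP; split.
  by apply/subsetP => x /imsetP[u _ ->]; apply: g_T1.
apply/forall_inP => x /imsetP[u _ ->]; apply/forall_inP => y /imsetP[v _ ->].
apply/implyP => ne; apply: ncg; apply: contra ne => /eqP ->; by [].
Qed.

End S.

Theorem lemma4p4 (F : finFieldType) :
  AC_group (T1 F) /\ omega (T1 F) = (#|F| ^ 2 + 1)%N.
Proof.
split; first exact: AC.
apply: anti_leq; apply/andP; split; last exact: lower.
by apply/bigmax_leqP => N /andP[sNT ncN]; apply: upper.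
Qed.
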